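(* Let $\mathcal C$ be a nondegenerate conic section in the projective plane, let $N\ge 2$ be an integer, and let $U,X_1,\dots,X_N,V,Y_N,\dots,Y_1$ be the consecutive vertices of a polygon $UX_1\dots X_NVY_N\dots Y_1$ inscribed in $\mathcal C$. Define the intersection points $A_j=X_jX_{j+1}\cap Y_jY_{j+1}$ for $j=1,\dots,N-1$, and \[ B = UX_1\cap Y_{2n}V,\quad C = UY_1\cap X_{2n}V \quad\text{if } N=2n, \] \[ B = UX_1\cap X_{2n+1}V,\quad C = UY_1\cap Y_{2n+1}V \quad\text{if } N=2n+1. \] If all of the points $A_1,\dots,A_{N-1},B,C$ except possibly one are collinear, then the remaining point lies on the same line as well.
   Context: $PQ$ denotes the line through points $P,Q$, and $\ell\cap m$ the intersection point of two lines. The points are assumed to be such that all the lines and intersection points above are well defined (i.e. in general position). *)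

(* Defs.v *)
From HB Require Import structures.
From mathcomp Require Import all_boot all_order all_algebra.
Set Implicit Arguments. Unset Strict Implicit. Unset Printing Implicit Defensive.
Import Order.TTheory GRing.Theory Num.Theory.
Local Open Scope ring_scope.

(* Projective plane P^2(R): a point (or a line) is represented by a nonzero
   row vector of R^3 (homogeneous coordinates), up to nonzero scalars. *)
Section Proj.
Variable R : numFieldType.
Implicit Types P Q L M : 'rV[R]_3.

Definition i0 : 'I_3 := @Ordinal 3 0 isT.
Definition i1 : 'I_3 := @Ordinal 3 1 isT.
Definition i2 : 'I_3 := @Ordinal 3 2 isT.

Definition crossv P Q : 'rV[R]_3 :=
  \row_(k < 3)
    (if k == i0 then P 0 i1 * Q 0 i2 - P 0 i2 * Q 0 i1
     else if k == i1 then P 0 i2 * Q 0 i0 - P 0 i0 * Q 0 i2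
     else P 0 i0 * Q 0 i1 - P 0 i1 * Q 0 i0).

Definition join P Q := crossv P Q.
Definition meet L M := crossv L M.

Definition incident P L : Prop := \sum_(k < 3) P 0 k * L 0 k = 0.

(* two nonzero vectors represent distinct projective points (resp. lines) *)
Definition pdistinct P Q : Prop := crossv P Q != 0.

Definition on_conic (C : 'M[R]_3) P : Prop := (P *m C *m P^T) 0 0 = 0.
Definition nondeg_conic (C : 'M[R]_3) : Prop := C^T = C /\ \det C != 0.

Definition polygon (N : nat) U V (X Y : nat -> 'rV[R]_3) : seq 'rV[R]_3 :=
  [:: U] ++ map X (iota 1 N) ++ [:: V] ++ rev (map Y (iota 1 N)).

Definition ptA (X Y : nat -> 'rV[R]_3) (j : nat) :=
  meet (join (X j) (X j.+1)) (join (Y j) (Y j.+1)).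

Definition linesB (N : nat) U V (X Y : nat -> 'rV[R]_3) :=
  (join U (X 1%N), if odd N then join (X N) V else join (Y N) V).
Definition linesC (N : nat) U V (X Y : nat -> 'rV[R]_3) :=
  (join U (Y 1%N), if odd N then join (Y N) V else join (X N) V).

Definition ptB N U V X Y := meet (linesB N U V X Y).1 (linesB N U V X Y).2.
Definition ptC N U V X Y := meet (linesC N U V X Y).1 (linesC N U V X Y).2.

(* the N+1 points A_1, ..., A_{N-1}, B, C, indexed by 0..N *)
Definition pts N U V X Y (j : nat) : 'rV[R]_3 :=
  if (j.+1 < N)%N then ptA X Y j.+1
  else if j == N.-1 then ptB N U V X Y else ptC N U V X Y.

Definition general_position N U V X Y : Prop :=
  (forall j, (1 <= j < N)%N ->
     pdistinct (join (X j) (X j.+1)) (join (Y j) (Y j.+1))) /\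
  pdistinct (linesB N U V X Y).1 (linesB N U V X Y).2 /\
  pdistinct (linesC N U V X Y).1 (linesC N U V X Y).2.

End Proj.

(* Main.v *)
Require Import Defs.
From HB Require Import structures.
From mathcomp Require Import all_boot all_order all_algebra ring zify.
Import Order.TTheory GRing.Theory Num.Theory.
Local Open Scope ring_scope.

Section S.
Variable R : numFieldType.
Implicit Types a b c p q z w v : R.
Definition Fq a b c z z' w w' := a * (-(z+z') + (w+w')) - b * (z * z' - w * w') + c * (-(z * z') * (w+w') + w * w' * (z+z')).
Definition Gq a b c p z v := a + b * p + c * (p * (z+v) - z * v).
Definition Rr a b c p q z w :=
  (p * c  *  z - (-(p * b) - a)) * (c * w - q * c) - (q * c * w - (-(q * b) - a)) * (c * z-p * c).
Lemma key a b c p q z z' w w' : c * (q-p) * Fq a b c z z' w w' = (z'-w') * Rr a b c p q z w + (z-w) * Rr a b c p q w' z'.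
Proof. rewrite /Fq /Rr /=. ring. Qed.
Lemma RG a b c p q z w v : Rr a b c p q z w = c * (w-q)  *  Gq a b c p z v - c * (z-p)  *  Gq a b c q w v.
Proof. rewrite /Gq /Rr. ring. Qed.
Lemma Rbase a b c p q : Rr a b c p q p q = 0.
Proof. rewrite /Rr. ring. Qed.
Lemma Fsym a b c z z' w w' : Fq a b c w w' z z' = - Fq a b c z z' w w'.
Proof. rewrite /Fq. ring. Qed.

Variables (N : nat) (x y : nat -> R) (v : R).
Definition zz k := if odd k then x k else y k.
Definition ww k := if odd k then y k else x k.
Definition cond a b c j : Prop :=
  if (j.+1 < N)%N then Fq a b c (x j.+1) (x j.+2) (y j.+1) (y j.+2) = 0
  else if j == N.-1 then Gq a b c (x 1) (zz N) v = 0
  else Gq a b c (y 1) (ww N) v = 0.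

Lemma stepgen a b c k : c * (y 1 - x 1)  *  Fq a b c (x k) (x k.+1) (y k) (y k.+1) =
  (if odd k then 1 else -1)  *  ((ww k.+1 - zz k.+1)  *  Rr a b c (x 1) (y 1) (zz k) (ww k)
   + (zz k - ww k)  *  Rr a b c (x 1) (y 1) (zz k.+1) (ww k.+1)).
Proof.
rewrite /zz /ww /=; case: (odd k) => /=.
  rewrite key; ring.
rewrite -[Fq _ _ _ (x k) _ _ _]opprK -Fsym mulrN key; ring.
Qed.

Lemma sgn_neq0 (k : nat) : (if odd k then 1 else -1 : R) != 0.
Proof. by case: (odd k); rewrite ?oppr_eq0 oner_eq0. Qed.

Lemma zw_neq0 k : x k != y k -> zz k - ww k != 0.
Proof. by rewrite /zz /ww subr_eq0 => H; case: (odd k) => //; rewrite eq_sym. Qed.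


Section Chain.
Variables (a b c : R).
Let p := x 1.
Let q := y 1.
Let r k := Rr a b c p q (zz k) (ww k) = 0.
Let F k := Fq a b c (x k) (x k.+1) (y k) (y k.+1) = 0.

Lemma stepF k : x k != y k -> r k -> F k -> r k.+1.
Proof.
move=> Hxy Hr HF; have := stepgen a b c k.
rewrite /r /F in Hr HF *; rewrite HF Hr !mulr0 add0r => /esym /eqP.
by rewrite mulf_eq0 (negbTE (sgn_neq0 _)) /= mulf_eq0 (negbTE (zw_neq0 _ Hxy)) /= => /eqP.
Qed.

Lemma stepB k : x k.+1 != y k.+1 -> r k.+1 -> F k -> r k.
Proof.
move=> Hxy Hr HF; have := stepgen a b c k.
rewrite /r /F in Hr HF *; rewrite HF Hr !mulr0 addr0 => /esym /eqP.
rewrite mulf_eq0 (negbTE (sgn_neq0 _)) /= mulf_eq0 => /orP [|/eqP //].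
by rewrite -oppr_eq0 opprB (negbTE (zw_neq0 _ Hxy)).
Qed.

Lemma stepA k : c != 0 -> x 1 != y 1 -> r k -> r k.+1 -> F k.
Proof.
move=> Hc Hxy Hr Hr'; have := stepgen a b c k.
rewrite /r /F in Hr Hr' *; rewrite Hr Hr' !mulr0 addr0 mulr0 => /eqP.
by rewrite !mulf_eq0 (negbTE Hc) subr_eq0 eq_sym (negbTE Hxy) /= => /eqP.
Qed.

Hypothesis HN : (2 <= N)%N.
Hypothesis Hxy : forall j k, (1 <= j <= N)%N -> (1 <= k <= N)%N -> x j != y k.
Hypothesis Hxx : forall j k, (1 <= j)%N -> (j < k)%N -> (k <= N)%N -> x j != x k.
Hypothesis Hyy : forall j k, (1 <= j)%N -> (j < k)%N -> (k <= N)%N -> y j != y k.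

Lemma forward j : (1 <= j <= N)%N -> (forall k, (1 <= k < j)%N -> F k) -> r j.
Proof.
elim: j => [//|j IH] /andP [hj1 hjN] HF.
case: (posnP j) => [->|jpos]; first by rewrite /r /zz /ww /= Rbase.
apply: stepF.
- by apply: Hxy; rewrite jpos /= ltnW.
- by apply: IH; [rewrite jpos ltnW | move=> k /andP [h1 h2]; apply: HF; rewrite h1 ltnS ltnW].
- by apply: HF; rewrite jpos /=.
Qed.

Lemma backward d j : (j + d = N)%N -> (1 <= j)%N -> (forall k, (j <= k < N)%N -> F k) -> r N -> r j.
Proof.
elim: d j => [|d IH] j hjd hj HF HrN; first by rewrite addn0 in hjd; rewrite hjd.
apply: stepB.
- by apply: Hxy; rewrite -hjd; lia.
- apply: IH => //; first by rewrite addSnnS.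
  by move=> k /andP [h1 h2]; apply: HF; rewrite h2 ltnW.
- by apply: HF; rewrite leqnn -hjd; lia.
Qed.


Lemma neq_zzN : x 1 != zz N.
Proof.
rewrite /zz; case: ifP => _; first by apply: Hxx => //; lia.
by apply: Hxy; lia.
Qed.

Lemma neq_wwN : y 1 != ww N.
Proof.
rewrite /ww; case: ifP => _; first by apply: Hyy => //; lia.
by rewrite eq_sym; apply: Hxy; lia.
Qed.

Lemma cond_A j : (j.+1 < N)%N -> cond a b c j = F j.+1.
Proof. by rewrite /cond => ->. Qed.
Lemma cond_B : cond a b c N.-1 = (Gq a b c (x 1) (zz N) v = 0).
Proof. rewrite /cond ifN ?eqxx //; lia. Qed.
Lemma cond_C : cond a b c N = (Gq a b c (y 1) (ww N) v = 0).
Proof. rewrite /cond ifN ?ifN //; lia. Qed.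

End Chain.

Theorem param a b c i : ~ (a = 0 /\ b = 0 /\ c = 0) -> (2 <= N)%N ->
  (forall j k, (1 <= j <= N)%N -> (1 <= k <= N)%N -> x j != y k) ->
  (forall j k, (1 <= j)%N -> (j < k)%N -> (k <= N)%N -> x j != x k) ->
  (forall j k, (1 <= j)%N -> (j < k)%N -> (k <= N)%N -> y j != y k) ->
  (i <= N)%N -> (forall j, (j <= N)%N -> j != i -> cond a b c j) -> cond a b c i.
Proof.
move=> Hl HN Hxy Hxx Hyy HiN H.
have x1y1 : x 1 != y 1 by apply: Hxy; lia.
have [c0|c0] := eqVneq c 0.
  exfalso; subst c.
  have hB : i != N.-1 -> a + b * x 1 = 0.
    move=> hi; have := H N.-1 (leq_pred _) (negbT (introF eqP (fun e => negP hi (introT eqP (esym e))))).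
    by rewrite (cond_B _ _ _ HN) /Gq mul0r addr0.
  have hC : i != N -> a + b * y 1 = 0.
    move=> hi; have := H N (leqnn _) (negbT (introF eqP (fun e => negP hi (introT eqP (esym e))))).
    by rewrite (cond_C _ _ _ HN) /Gq mul0r addr0.
  have hA : i != 0%N -> Fq a b 0 (x 1) (x 2) (y 1) (y 2) = 0.
    move=> hi; have := H 0%N (leq0n _) (negbT (introF eqP (fun e => negP hi (introT eqP (esym e))))).
    by rewrite (cond_A a b 0 0 HN).
  have b0a0 : b = 0 -> a = 0.
    move=> b0; subst b.
    case: (eqVneq i N) => [iN|iN]; last by move: (hC iN); rewrite mul0r addr0.
    have : i != N.-1 by rewrite iN; lia.
    by move/hB; rewrite mul0r addr0.
  have b0 : b = 0.
    case: (eqVneq i N) => [iN|iN].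
      have hi : i != N.-1 by rewrite iN; lia.
      have hi0 : i != 0%N by rewrite iN; lia.
      have ea : a = - (b * x 1) by apply/eqP; rewrite -addr_eq0 hB.
      have := hA hi0; rewrite /Fq ea.
      have -> : - (b * x 1) * (- (x 1 + x 2) + (y 1 + y 2)) - b * (x 1 * x 2 - y 1 * y 2) +
        0 * (- (x 1 * x 2) * (y 1 + y 2) + y 1 * y 2 * (x 1 + x 2)) = b * ((x 1 - y 1) * (x 1 - y 2)) by ring.
      move/eqP; rewrite !mulf_eq0 !subr_eq0 (negbTE x1y1) /=.
      have -> : (x 1 == y 2) = false by apply/negbTE/Hxy; lia.
      by rewrite orbF => /eqP.
    case: (eqVneq i N.-1) => [iN1|iN1].
      have hi0 : i != 0%N by rewrite iN1; lia.
      have ea : a = - (b * y 1) by apply/eqP; rewrite -addr_eq0 hC.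
      have := hA hi0; rewrite /Fq ea.
      have -> : - (b * y 1) * (- (x 1 + x 2) + (y 1 + y 2)) - b * (x 1 * x 2 - y 1 * y 2) +
        0 * (- (x 1 * x 2) * (y 1 + y 2) + y 1 * y 2 * (x 1 + x 2)) = - (b * ((y 1 - x 1) * (y 1 - x 2))) by ring.
      move/eqP; rewrite oppr_eq0 !mulf_eq0 !subr_eq0. rewrite [y 1 == x 1]eq_sym (negbTE x1y1) /=.
      have -> : (y 1 == x 2) = false by rewrite eq_sym; apply/negbTE/Hxy; lia.
      by rewrite orbF => /eqP.
    have e1 := hB iN1; have e2 := hC iN.
    have : b * (x 1 - y 1) = 0 by rewrite mulrBr -[b * x 1](addKr a) e1 -[b * y 1](addKr a) e2; ring.
    by move/eqP; rewrite mulf_eq0 subr_eq0 (negbTE x1y1) orbF => /eqP.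
  by apply: Hl; split; [apply: b0a0|split].
have Hall : forall j, (j <= N)%N -> j != i -> cond a b c j := H.
case: (eqVneq i N) => [iN|iN].
  subst i; rewrite (cond_C _ _ _ HN).
  have HrN : Rr a b c (x 1) (y 1) (zz N) (ww N) = 0.
    apply: forward => //; first lia.
    move=> k /andP [k1 kN]; have := H k.-1 (ltnW (leq_ltn_trans (leq_pred _) kN)).
    rewrite (cond_A a b c k.-1); last by lia.
    by rewrite prednK //; apply; lia.
  have HB : Gq a b c (x 1) (zz N) v = 0.
    by rewrite -(cond_B _ _ _ HN); apply: H; lia.
  move: HrN; rewrite (RG _ _ _ _ _ _ _ v) HB mulr0 sub0r => /eqP; rewrite oppr_eq0 !mulf_eq0 (negbTE c0) /=.
  by rewrite subr_eq0 eq_sym (negbTE (neq_zzN HN Hxy Hxx)) /= => /eqP.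
case: (eqVneq i N.-1) => [iN1|iN1].
  subst i; rewrite (cond_B _ _ _ HN).
  have HrN : Rr a b c (x 1) (y 1) (zz N) (ww N) = 0.
    apply: forward => //; first lia.
    move=> k /andP [k1 kN]; have := H k.-1 (ltnW (leq_ltn_trans (leq_pred _) kN)).
    rewrite (cond_A a b c k.-1); last by lia.
    by rewrite prednK //; apply; lia.
  have HC : Gq a b c (y 1) (ww N) v = 0.
    by rewrite -(cond_C _ _ _ HN); apply: H; lia.
  move: HrN; rewrite (RG _ _ _ _ _ _ _ v) HC mulr0 subr0 => /eqP; rewrite !mulf_eq0 (negbTE c0) /=.
  by rewrite subr_eq0 eq_sym (negbTE (neq_wwN HN Hxy Hyy)) /= => /eqP.
have iN2 : (i.+1 < N)%N by lia.
rewrite (cond_A _ _ _ _ iN2).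
have HF : forall k, (1 <= k < N)%N -> k != i.+1 -> Fq a b c (x k) (x k.+1) (y k) (y k.+1) = 0.
  move=> k /andP [k1 kN] ki; have := H k.-1 (ltnW (leq_ltn_trans (leq_pred _) kN)).
  rewrite (cond_A a b c k.-1); last by lia.
  by rewrite prednK //; apply; lia.
have HB : Gq a b c (x 1) (zz N) v = 0 by rewrite -(cond_B _ _ _ HN); apply: H; lia.
have HC : Gq a b c (y 1) (ww N) v = 0 by rewrite -(cond_C _ _ _ HN); apply: H; lia.
have HrN : Rr a b c (x 1) (y 1) (zz N) (ww N) = 0 by rewrite (RG _ _ _ _ _ _ _ v) HB HC !mulr0 subr0.
have Hr1 : Rr a b c (x 1) (y 1) (zz i.+1) (ww i.+1) = 0.
  apply: forward => //; first lia.
  by move=> k /andP [k1 kN]; apply: HF; lia.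
have Hr2 : Rr a b c (x 1) (y 1) (zz i.+2) (ww i.+2) = 0.
  apply: (backward _ _ _ HN Hxy (N - i.+2)%N) => //; try lia.
  by move=> k /andP [k1 kN]; apply: HF; lia.
exact: stepA.
Qed.

End S.
Arguments Fq {R}. Arguments Gq {R}. Arguments Rr {R}.

Section G.
Variable R : numFieldType.
Implicit Types P Q L : 'rV[R]_3.

Definition v3 (a b c : R) : 'rV[R]_3 :=
  \row_(k < 3) (if k == i0 then a else if k == i1 then b else c).

Lemma v3_0 a b c : (v3 a b c) 0 i0 = a. Proof. by rewrite mxE. Qed.
Lemma v3_1 a b c : (v3 a b c) 0 i1 = b. Proof. by rewrite mxE. Qed.
Lemma v3_2 a b c : (v3 a b c) 0 i2 = c. Proof. by rewrite mxE. Qed.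

Lemma ord3P (k : 'I_3) : k = i0 \/ k = i1 \/ k = i2.
Proof.
case: k => [[|[|[|k]]] Hk]; [left|right;left|right;right|by []]; by apply: val_inj.
Qed.

Lemma v3E P : P = v3 (P 0 i0) (P 0 i1) (P 0 i2).
Proof.
apply/rowP => k; rewrite mxE; case: (ord3P k) => [->|[->|->]]; rewrite //=.
Qed.

Lemma v3_eq a b c a' b' c' : (v3 a b c = v3 a' b' c') <-> [/\ a = a', b = b' & c = c'].
Proof.
split; last by case=> -> -> ->.
move=> e; split.
- by have := v3_0 a b c; rewrite e v3_0.
- by have := v3_1 a b c; rewrite e v3_1.
- by have := v3_2 a b c; rewrite e v3_2.
Qed.

Lemma v3_eq0 a b c : (v3 a b c == 0) = [&& a == 0, b == 0 & c == 0].
Proof.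
apply/eqP/and3P.
  move=> e; have : v3 a b c = v3 0 0 0 by rewrite e; apply/rowP => k; rewrite !mxE; case: ifP => //; case: ifP.
  by case/v3_eq => -> -> ->.
case=> /eqP -> /eqP -> /eqP ->; apply/rowP => k; rewrite !mxE; case: ifP => //; case: ifP => //.
Qed.

Lemma crossv_v3 a b c d e f : crossv (v3 a b c) (v3 d e f) = v3 (b*f - c*e) (c*d - a*f) (a*e - b*d).
Proof.
apply/rowP => k; rewrite !mxE; case: (ord3P k) => [->|[->|->]] /=; by [].
Qed.

Lemma scale_v3 s a b c : s *: v3 a b c = v3 (s*a) (s*b) (s*c).
Proof. apply/rowP => k; rewrite !mxE; case: ifP => //; case: ifP => //. Qed.

Lemma add_v3 a b c d e f : v3 a b c + v3 d e f = v3 (a+d) (b+e) (c+f).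
Proof. apply/rowP => k; rewrite !mxE; case: ifP => //; case: ifP => //. Qed.

Lemma sum3 (f : 'I_3 -> R) : \sum_(k < 3) f k = f i0 + f i1 + f i2.
Proof.
rewrite !big_ord_recr big_ord0 /= add0r; congr (f _ + f _ + f _); by apply: val_inj.
Qed.

Definition dot P Q := P 0 i0 * Q 0 i0 + P 0 i1 * Q 0 i1 + P 0 i2 * Q 0 i2.

Lemma incidentE P L : incident P L <-> dot P L = 0.
Proof. by rewrite /incident sum3. Qed.

Lemma dot_v3 a b c d e f : dot (v3 a b c) (v3 d e f) = a*d + b*e + c*f.
Proof. by rewrite /dot !(v3_0,v3_1,v3_2). Qed.

Definition det3 (M : 'M[R]_3) :=
  M i0 i0 * (M i1 i1 * M i2 i2 - M i1 i2 * M i2 i1)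
  - M i0 i1 * (M i1 i0 * M i2 i2 - M i1 i2 * M i2 i0)
  + M i0 i2 * (M i1 i0 * M i2 i1 - M i1 i1 * M i2 i0).

Lemma det3E (M : 'M[R]_3) : \det M = det3 M.
Proof.
rewrite (expand_det_row _ i0) sum3 /cofactor.
have h2 : forall A : 'M[R]_2, \det A = A 0 0 * A 1 1 - A 0 1 * A 1 0.
  move=> A; rewrite (expand_det_row _ 0) !big_ord_recr big_ord0 /= add0r /cofactor !det_mx11 !mxE /=.
  have -> : (widen_ord (leqnSn 1) ord_max) = 0 :> 'I_2 by apply: val_inj.
  have -> : (@ord_max 1) = 1 :> 'I_2 by apply: val_inj.
  have l1 : lift (0:'I_2) (0:'I_1) = 1 by apply: val_inj.
  have l0 : lift (1:'I_2) (0:'I_1) = 0 by apply: val_inj.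
  by rewrite l1 l0 /= expr0 expr1 mul1r mulN1r mulrN.
rewrite !h2 !mxE.
have e00 : lift i0 (0:'I_2) = i1 by apply: val_inj.
have e01 : lift i0 (1:'I_2) = i2 by apply: val_inj.
have e10 : lift i1 (0:'I_2) = i0 by apply: val_inj.
have e11 : lift i1 (1:'I_2) = i2 by apply: val_inj.
have e20 : lift i2 (0:'I_2) = i0 by apply: val_inj.
have e21 : lift i2 (1:'I_2) = i1 by apply: val_inj.
rewrite e00 e01 e10 e11 e20 e21 /det3 /=.
rewrite expr0 expr1 (_ : (-1) ^+ 2 = 1 :> R); last by rewrite sqrrN expr1n.
ring.
Qed.

Definition Bf (C : 'M[R]_3) P Q :=
  P 0 i0 * (C i0 i0 * Q 0 i0 + C i0 i1 * Q 0 i1 + C i0 i2 * Q 0 i2)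
+ P 0 i1 * (C i1 i0 * Q 0 i0 + C i1 i1 * Q 0 i1 + C i1 i2 * Q 0 i2)
+ P 0 i2 * (C i2 i0 * Q 0 i0 + C i2 i1 * Q 0 i1 + C i2 i2 * Q 0 i2).

Lemma BfE (C : 'M[R]_3) P Q : (P *m C *m Q^T) 0 0 = Bf C P Q.
Proof.
rewrite !mxE sum3 !mxE !sum3 /Bf; ring.
Qed.

Lemma on_conicE (C : 'M[R]_3) P : on_conic C P <-> Bf C P P = 0.
Proof. by rewrite /on_conic BfE. Qed.

Definition vdet P Q L := dot P (crossv Q L).

Definition adjv (C : 'M[R]_3) (w : 'rV[R]_3) : 'rV[R]_3 :=
  v3 (w 0 i0 * (C i1 i1 * C i2 i2 - C i1 i2 * C i2 i1)
      + w 0 i1 * (C i1 i2 * C i2 i0 - C i1 i0 * C i2 i2)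
      + w 0 i2 * (C i1 i0 * C i2 i1 - C i1 i1 * C i2 i0))
     (w 0 i0 * (C i0 i2 * C i2 i1 - C i0 i1 * C i2 i2)
      + w 0 i1 * (C i0 i0 * C i2 i2 - C i0 i2 * C i2 i0)
      + w 0 i2 * (C i0 i1 * C i2 i0 - C i0 i0 * C i2 i1))
     (w 0 i0 * (C i0 i1 * C i1 i2 - C i0 i2 * C i1 i1)
      + w 0 i1 * (C i0 i2 * C i1 i0 - C i0 i0 * C i1 i2)
      + w 0 i2 * (C i0 i0 * C i1 i1 - C i0 i1 * C i1 i0)).

Ltac vs := rewrite ?(crossv_v3, scale_v3, add_v3, dot_v3, v3_0, v3_1, v3_2).

Lemma Bf_adjv (C : 'M[R]_3) w P : Bf C (adjv C w) P = det3 C * dot w P.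
Proof. rewrite /Bf /adjv /det3 /dot !(v3_0, v3_1, v3_2). ring. Qed.

Definition symC (C : 'M[R]_3) := [/\ C i1 i0 = C i0 i1, C i2 i0 = C i0 i2 & C i2 i1 = C i1 i2].

Lemma D_g (C : 'M[R]_3) X U : symC C ->
  vdet X (adjv C (crossv X U)) U = Bf C X U ^+ 2 - Bf C X X * Bf C U U.
Proof.
case=> s10 s20 s21.
rewrite /vdet /Bf /adjv /dot (v3E X) (v3E U); vs.
rewrite s10 s20 s21. ring.
Qed.

Definition gramdet (a b c d e f : R) := a*(d*f - e*e) - b*(b*f - e*c) + c*(b*e - d*c).

Lemma gram (C : 'M[R]_3) X U Y : symC C ->
  vdet X U Y ^+ 2 * det3 C = gramdet (Bf C X X) (Bf C X U) (Bf C X Y) (Bf C U U) (Bf C U Y) (Bf C Y Y).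
Proof.
case=> s10 s20 s21.
rewrite /vdet /Bf /gramdet /det3 /dot (v3E X) (v3E U) (v3E Y); vs.
rewrite s10 s20 s21. ring.
Qed.

Definition combv (t0 t1 t2 p : 'rV[R]_3) := p 0 i0 *: t0 + p 0 i1 *: t1 + p 0 i2 *: t2.
Definition ltr3 (t0 t1 t2 L : 'rV[R]_3) := v3 (dot t0 L) (dot t1 L) (dot t2 L).

Lemma transport t0 t1 t2 a b c d L :
  dot (crossv (crossv (combv t0 t1 t2 a) (combv t0 t1 t2 b)) (crossv (combv t0 t1 t2 c) (combv t0 t1 t2 d))) L
  = vdet t0 t1 t2 * dot (crossv (crossv a b) (crossv c d)) (ltr3 t0 t1 t2 L).
Proof.
rewrite /combv /ltr3 /vdet (v3E t0) (v3E t1) (v3E t2) (v3E a) (v3E b) (v3E c) (v3E d) (v3E L); vs.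
ring.
Qed.

Definition pv (l s : R) := v3 l (l * s) (l * s ^+ 2).

Lemma FA l1 l2 l3 l4 s1 s2 s3 s4 a b c :
  dot (crossv (crossv (pv l1 s1) (pv l2 s2)) (crossv (pv l3 s3) (pv l4 s4))) (v3 a b c)
  = l1 * l2 * l3 * l4 * (s2 - s1) * (s4 - s3) * Fq a b c s1 s2 s3 s4.
Proof. rewrite /pv /Fq; vs; ring. Qed.

Lemma FB k l1 l2 l3 s1 s2 s3 a b c :
  dot (crossv (crossv (v3 0 0 k) (pv l1 s1)) (crossv (pv l2 s2) (pv l3 s3))) (v3 a b c)
  = k * l1 * l2 * l3 * (s3 - s2) * Gq a b c s1 s2 s3.
Proof. rewrite /pv /Gq; vs; ring. Qed.

Lemma Bf_sym (C : 'M[R]_3) P Q : symC C -> Bf C P Q = Bf C Q P.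
Proof. case=> s10 s20 s21; rewrite /Bf s10 s20 s21; ring. Qed.

Lemma Bf_scale (C : 'M[R]_3) k P : Bf C (k *: P) (k *: P) = k * k * Bf C P P.
Proof. rewrite /Bf !mxE; ring. Qed.

Lemma Bf_exp (C : 'M[R]_3) a b c P Q S : symC C ->
  Bf C (a *: P + b *: Q + c *: S) (a *: P + b *: Q + c *: S) =
  a * a * Bf C P P + b * b * Bf C Q Q + c * c * Bf C S S
  + 2 * a * b * Bf C P Q + 2 * a * c * Bf C P S + 2 * b * c * Bf C Q S.
Proof. case=> s10 s20 s21; rewrite /Bf !mxE s10 s20 s21; ring. Qed.

Lemma cramer X T U W :
  vdet X T U *: W = vdet W T U *: X + vdet X W U *: T + vdet X T W *: U.
Proof.
rewrite /vdet (v3E X) (v3E T) (v3E U) (v3E W); vs.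
apply/v3_eq; split; ring.
Qed.

Lemma dot_cross_vdet X U T : dot (crossv X U) T = - vdet X T U.
Proof. rewrite /vdet (v3E X) (v3E T) (v3E U); vs; ring. Qed.

Lemma crossvZ k P Q : crossv P (k *: Q) = k *: crossv P Q.
Proof. rewrite (v3E P) (v3E Q); vs; apply/v3_eq; split; ring. Qed.
Lemma crossZv k P Q : crossv (k *: P) Q = k *: crossv P Q.
Proof. rewrite (v3E P) (v3E Q); vs; apply/v3_eq; split; ring. Qed.
Lemma crossvv P : crossv P P = 0.
Proof. apply/eqP; rewrite (v3E P); vs; rewrite v3_eq0; apply/and3P; split; apply/eqP; ring. Qed.
Lemma crossvC P Q : crossv P Q = - crossv Q P.
Proof. rewrite (v3E P) (v3E Q); vs; rewrite -scaleN1r; vs; apply/v3_eq; split; ring. Qed.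

Section Conic.
Variables (C : 'M[R]_3) (U X1 : 'rV[R]_3).
Hypotheses (Hs : symC C) (Hd : det3 C != 0) (HU : Bf C U U = 0) (HX : Bf C X1 X1 = 0)
  (Hw : crossv U X1 != 0).

Definition tT := adjv C (crossv X1 U).
Definition gg := Bf C X1 U.
Definition DD := vdet X1 tT U.
Definition kap := det3 C * gg / 2.

Lemma g_neq0 : gg != 0.
Proof.
apply/negP => /eqP g0.
have h : forall Y, vdet X1 U Y = 0.
  move=> Y; have := gram C X1 U Y Hs; rewrite HX HU -/gg g0 /gramdet.
  rewrite !(mul0r, mulr0, subr0, sub0r, add0r, addr0, oppr0) => /eqP.
  by rewrite mulf_eq0 (negbTE Hd) orbF expf_eq0 /= => /eqP.
move/negP: Hw; apply; rewrite (v3E U) (v3E X1); vs; rewrite v3_eq0.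
have h0 := h (v3 1 0 0); have h1 := h (v3 0 1 0); have h2 := h (v3 0 0 1).
move: h0 h1 h2; rewrite /vdet (v3E X1) (v3E U); vs => h0 h1 h2.
apply/and3P; split; apply/eqP.
- by rewrite -[RHS]oppr0 -[X in _ = - X]h0; ring.
- by rewrite -[RHS]oppr0 -[X in _ = - X]h1; ring.
- by rewrite -[RHS]oppr0 -[X in _ = - X]h2; ring.
Qed.

Lemma D_eq : DD = gg ^+ 2.
Proof. by rewrite /DD /tT D_g // HX HU mulr0 subr0. Qed.

Lemma D_neq0 : DD != 0.
Proof. by rewrite D_eq expf_neq0 // g_neq0. Qed.

Lemma BfTX : Bf C tT X1 = 0.
Proof. rewrite /tT Bf_adjv (v3E X1) (v3E U); vs; rewrite /dot; vs; ring. Qed.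
Lemma BfTU : Bf C tT U = 0.
Proof. rewrite /tT Bf_adjv (v3E X1) (v3E U); vs; rewrite /dot; vs; ring. Qed.
Lemma BfTT : Bf C tT tT = - (det3 C * DD).
Proof. by rewrite {1}/tT Bf_adjv dot_cross_vdet mulrN. Qed.

Lemma param_pt W : Bf C W W = 0 -> crossv U W != 0 ->
  vdet W tT U != 0 /\
  W = (vdet W tT U / DD) *: (X1 + (vdet X1 W U / vdet W tT U) *: tT
        + ((vdet X1 W U / vdet W tT U) ^+ 2 * kap) *: U).
Proof.
move=> HW HUW.
set al := vdet W tT U; set be := vdet X1 W U; set ga := vdet X1 tT W.
have cr : DD *: W = al *: X1 + be *: tT + ga *: U by rewrite /DD cramer.
have e0 : Bf C (DD *: W) (DD *: W) = 0 by rewrite Bf_scale HW mulr0.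
rewrite cr Bf_exp // HX HU (Bf_sym C X1 tT Hs) BfTX BfTU BfTT -/gg D_eq in e0.
have e1 : gg * (2 * al * ga - det3 C * gg * (be * be)) = 0.
  by rewrite -e0; ring.
move/eqP: e1; rewrite mulf_eq0 (negbTE g_neq0) /= subr_eq0 => /eqP e1.
have alN : al != 0.
  apply/negP => /eqP al0.
  move: e1; rewrite al0 mulr0 mul0r => /esym/eqP; rewrite !mulf_eq0 (negbTE Hd) (negbTE g_neq0) /= orbb => /eqP be0.
  rewrite al0 be0 !scale0r !add0r in cr.
  move/negP: HUW; apply; apply/eqP.
  have : crossv U (DD *: W) = 0 by rewrite cr crossvZ crossvv scaler0.
  by rewrite crossvZ => /eqP; rewrite scaler_eq0 (negbTE D_neq0) /= => /eqP.
split => //.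
have ega : ga = al * (be / al) ^+ 2 * kap.
  rewrite /kap; apply: (mulfI alN); apply: (mulfI (_ : (2:R) != 0)); first by rewrite pnatr_eq0.
  rewrite !mulrA e1; field.
  exact: alN.
apply/rowP => k.
have ck := congr1 (fun M : 'rV[R]_3 => M 0 k) cr; rewrite /= !mxE in ck.
rewrite !mxE; apply: (mulfI D_neq0); rewrite ck ega; field.
by rewrite alN D_neq0.
Qed.

End Conic.

Lemma combv_pv t0 t1 t2 l s :
  combv t0 t1 t2 (pv l s) = l *: (t0 + s *: t1 + (s ^+ 2) *: t2).
Proof. apply/rowP => k; rewrite /combv /pv; vs; rewrite !mxE; ring. Qed.

Lemma combv_pv1 t0 t1 t2 l s : combv t0 t1 t2 (pv l s) = l *: combv t0 t1 t2 (pv 1 s).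
Proof. by rewrite !combv_pv scale1r. Qed.

Lemma combv_u t0 t1 t2 k : combv t0 t1 t2 (v3 0 0 k) = k *: t2.
Proof. apply/rowP => j; rewrite /combv; vs; rewrite !mxE; ring. Qed.

Lemma incA t0 t1 t2 L P1 P2 P3 P4 l1 s1 l2 s2 l3 s3 l4 s4 :
  P1 = combv t0 t1 t2 (pv l1 s1) -> P2 = combv t0 t1 t2 (pv l2 s2) ->
  P3 = combv t0 t1 t2 (pv l3 s3) -> P4 = combv t0 t1 t2 (pv l4 s4) ->
  dot (crossv (crossv P1 P2) (crossv P3 P4)) L =
  vdet t0 t1 t2 * (l1 * l2 * l3 * l4 * (s2 - s1) * (s4 - s3)) *
    Fq (dot t0 L) (dot t1 L) (dot t2 L) s1 s2 s3 s4.
Proof. by move=> -> -> -> ->; rewrite transport /ltr3 FA !mulrA. Qed.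

Lemma incB t0 t1 t2 L P0 P1 P2 P3 k l1 s1 l2 s2 l3 s3 :
  P0 = combv t0 t1 t2 (v3 0 0 k) -> P1 = combv t0 t1 t2 (pv l1 s1) ->
  P2 = combv t0 t1 t2 (pv l2 s2) -> P3 = combv t0 t1 t2 (pv l3 s3) ->
  dot (crossv (crossv P0 P1) (crossv P2 P3)) L =
  vdet t0 t1 t2 * (k * l1 * l2 * l3 * (s3 - s2)) *
    Gq (dot t0 L) (dot t1 L) (dot t2 L) s1 s2 s3.
Proof. by move=> -> -> -> ->; rewrite transport /ltr3 FB !mulrA. Qed.

Lemma L_recover t0 t1 t2 L :
  vdet t0 t1 t2 *: L = dot t0 L *: crossv t1 t2 + dot t1 L *: crossv t2 t0 + dot t2 L *: crossv t0 t1.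
Proof.
rewrite /vdet (v3E t0) (v3E t1) (v3E t2) (v3E L) /dot; vs.
apply/v3_eq; split; ring.
Qed.

Lemma vdet_scale3 t0 t1 t2 k : vdet t0 t1 (k *: t2) = k * vdet t0 t1 t2.
Proof. by rewrite /vdet crossvZ /dot !mxE; ring. Qed.

End G.


Lemma mul_eq0_iff (R : numFieldType) (k f : R) : k != 0 -> (k * f = 0 <-> f = 0).
Proof.
move=> kN; split => [/eqP|->]; last by rewrite mulr0.
by rewrite mulf_eq0 (negbTE kN) /= => /eqP.
Qed.

Lemma cross_same (R : numFieldType) t0 t1 t2 (l1 l2 s : R) :
  crossv (combv R t0 t1 t2 (pv R l1 s)) (combv R t0 t1 t2 (pv R l2 s)) = 0.
Proof.
rewrite (combv_pv1 _ _ _ _ l1) (combv_pv1 _ _ _ _ l2) crossZv crossvZ crossvv !scaler0 //.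
Qed.

Section Poly.
Variables (R : numFieldType) (N : nat) (U V : 'rV[R]_3) (X Y : nat -> 'rV[R]_3).
Let pl := polygon N U V X Y.

Lemma size_pl : size pl = (N + N).+2.
Proof. by rewrite /pl /polygon /= !size_cat /= size_rev !size_map size_iota addnS. Qed.

Lemma nth_U : nth 0 pl 0 = U. Proof. by []. Qed.

Lemma nth_X k : (1 <= k <= N)%N -> nth 0 pl k = X k.
Proof.
case: k => [//|k] /andP [_ hk].
rewrite /pl /polygon /= nth_cat size_map size_iota hk (nth_map 0%N); last by rewrite size_iota.
by rewrite nth_iota.
Qed.

Lemma nth_V : nth 0 pl N.+1 = V.
Proof. by rewrite /pl /polygon /= nth_cat size_map size_iota ltnn subnn. Qed.

Lemma nth_Y k : (1 <= k <= N)%N -> nth 0 pl (N.+2 + (N - k)) = Y k.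
Proof.
move=> /andP [h1 h2].
rewrite /pl /polygon /= nth_cat size_map size_iota.
have -> : (N.+1 + (N - k) < N)%N = false by lia.
have -> : (N.+1 + (N - k) - N = (N - k).+1)%N by lia.
rewrite /= nth_rev; last by rewrite size_map size_iota; lia.
rewrite size_map size_iota (nth_map 0%N); last by rewrite size_iota; lia.
rewrite nth_iota; last by lia.
by congr Y; lia.
Qed.

End Poly.

Theorem theorem2 (R : numFieldType) (C : 'M[R]_3) (N : nat)
    (U V : 'rV[R]_3) (X Y : nat -> 'rV[R]_3) :
  nondeg_conic C ->
  (2 <= N)%N ->
  (forall P, P \in polygon N U V X Y -> P != 0 /\ on_conic C P) ->
  (forall i j, (i < j < size (polygon N U V X Y))%N ->
     pdistinct (nth 0 (polygon N U V X Y) i) (nth 0 (polygon N U V X Y) j)) ->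
  general_position N U V X Y ->
  (exists i, (i <= N)%N /\ exists L : 'rV[R]_3, L != 0 /\
     forall j, (j <= N)%N -> j != i -> incident (pts N U V X Y j) L) ->
  exists L : 'rV[R]_3, L != 0 /\
     forall j, (j <= N)%N -> incident (pts N U V X Y j) L.
Proof.
move=> [HCt HdC] HN Hon Hdist _ [i [HiN [L [LN0 HL]]]].
exists L; split => //.
have iX : forall k, (0 < k <= N)%N -> (0 < k < (N+N).+2)%N by move=> k; lia.
have iY : forall k, (0 < k <= N)%N -> (0 < N.+2 + (N - k) < (N+N).+2)%N by move=> k; lia.
have iV : (0 < N.+1 < (N+N).+2)%N by lia.
have iXY : forall j k, (0 < j <= N)%N -> (0 < k <= N)%N -> j != (N.+2 + (N - k))%N by move=> j k; lia.
have iXV : forall k, (0 < k <= N)%N -> k != N.+1 by move=> k; lia.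
have iYV : forall k, (0 < k <= N)%N -> (N.+2 + (N - k))%N != N.+1 by move=> k; lia.
have iYY : forall j k, (0 < j)%N -> (j < k)%N -> (k <= N)%N -> (N.+2 + (N - j))%N != (N.+2 + (N - k))%N.
  by move=> j k; lia.
have iXX : forall j k, (0 < j)%N -> (j < k)%N -> (k <= N)%N -> (0 < j <= N)%N && (0 < k <= N)%N && (j != k).
  by move=> j k; lia.
have iA : forall j, (j.+1 < N)%N -> (0 < j.+1 <= N)%N && (0 < j.+2 <= N)%N by move=> j; lia.
have hk1 : (0 < 1 <= N)%N by lia.
have hkN : (0 < N <= N)%N by lia.
set pl := polygon N U V X Y.
have Hsz := size_pl _ N U V X Y; rewrite -/pl in Hsz.
have Hd2 : forall n m, (n < size pl)%N -> (m < size pl)%N -> n != m ->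
    crossv (nth 0 pl n) (nth 0 pl m) != 0.
  move=> n m hn hm; case: (ltngtP n m) => // h _.
    by apply: Hdist; rewrite h.
  by rewrite crossvC oppr_eq0; apply: Hdist; rewrite h.
have Hc : forall n, (n < size pl)%N -> Bf _ C (nth 0 pl n) (nth 0 pl n) = 0.
  by move=> n hn; apply/on_conicE; case: (Hon _ (mem_nth 0 hn)).
have Hs : symC _ C.
  have t : forall a b, C b a = C a b by move=> a b; rewrite -{1}HCt mxE.
  by split; apply: t.
have Hd : det3 _ C != 0 by rewrite -det3E.
have HU : Bf _ C U U = 0 by have := Hc 0%N; rewrite Hsz => /(_ isT).
have nX := nth_X _ N U V X Y; have nY := nth_Y _ N U V X Y; have nV := nth_V _ N U V X Y.
rewrite -/pl in nX nY nV.
have HX1 : Bf _ C (X 1%N) (X 1%N) = 0.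
  by rewrite -(nX 1%N hk1) Hc // Hsz.
have nU : pl`_0 = U := nth_U _ N U V X Y.
have h1 := hk1.
have Hw : crossv U (X 1%N) != 0.
  by have := Hd2 0%N 1%N; rewrite Hsz nU (nX 1%N h1) => /(_ isT isT isT).
set T := tT _ C U (X 1%N).
set D := DD _ C U (X 1%N).
set t2 := kap _ C U (X 1%N) *: U.
have DN : D != 0 := D_neq0 _ _ _ _ Hs Hd HU HX1 Hw.
have kN : kap _ C U (X 1%N) != 0.
  rewrite /kap mulf_neq0 ?invr_neq0 ?pnatr_eq0 // mulf_neq0 //.
  exact: (g_neq0 _ _ _ _ Hs Hd HU HX1 Hw).
have DtN : vdet _ (X 1%N) T t2 != 0 by rewrite /t2 vdet_scale3 mulf_neq0.
pose parW W := vdet _ (X 1%N) W U / vdet _ W T U.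
pose lamW W := vdet _ W T U / D.
have rep : forall W, Bf _ C W W = 0 -> crossv U W != 0 ->
    lamW W != 0 /\ W = combv _ (X 1%N) T t2 (pv _ (lamW W) (parW W)).
  move=> W HW HUW; have [aN eW] := param_pt _ _ _ _ Hs Hd HU HX1 Hw W HW HUW.
  rewrite -/T -/D in aN eW.
  split; first by rewrite /lamW mulf_neq0 // invr_neq0.
  by rewrite combv_pv {1}eW /t2 scalerA.
clearbody lamW parW.
have repn : forall n, (0 < n < size pl)%N ->
    lamW pl`_n != 0 /\ pl`_n = combv _ (X 1%N) T t2 (pv _ (lamW pl`_n) (parW pl`_n)).
  move=> n /andP [n0 hn]; apply: rep; first exact: Hc.
  by have := Hd2 0%N n; rewrite nU => /(_ _ hn); apply; [rewrite Hsz | rewrite eq_sym -lt0n].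
have parN : forall n m, (0 < n < size pl)%N -> (0 < m < size pl)%N -> n != m ->
    parW pl`_n != parW pl`_m.
  move=> n m hn hm nm; apply/negP => /eqP e.
  have [_ en] := repn n hn; have [_ em] := repn m hm.
  move: (Hd2 n m (proj2 (andP hn)) (proj2 (andP hm)) nm).
  by rewrite en em e cross_same eqxx.
pose x k := parW (X k). pose y k := parW (Y k). pose v := parW V.
have repX : forall k, (0 < k <= N)%N -> lamW (X k) != 0 /\ X k = combv _ (X 1%N) T t2 (pv _ (lamW (X k)) (x k)).
  move=> k hk; have := repn k; rewrite (nX k hk); apply; rewrite Hsz; exact: iX.
have repY : forall k, (0 < k <= N)%N -> lamW (Y k) != 0 /\ Y k = combv _ (X 1%N) T t2 (pv _ (lamW (Y k)) (y k)).
  move=> k hk; have := repn (N.+2 + (N - k))%N; rewrite (nY k hk); apply; rewrite Hsz; exact: iY.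
have repV : lamW V != 0 /\ V = combv _ (X 1%N) T t2 (pv _ (lamW V) v).
  have := repn N.+1; rewrite nV; apply; rewrite Hsz; exact: iV.
have repU : U = combv _ (X 1%N) T t2 (v3 _ 0 0 (kap _ C U (X 1%N))^-1).
  by rewrite combv_u /t2 scalerA mulVf // scale1r.
have Hxy : forall j k, (0 < j <= N)%N -> (0 < k <= N)%N -> x j != y k.
  move=> j k hj hk; rewrite /x /y -(nX j hj) -(nY k hk); apply: parN; [rewrite Hsz; exact: iX | rewrite Hsz; exact: iY | exact: iXY].
have Hxx : forall j k, (0 < j)%N -> (j < k)%N -> (k <= N)%N -> x j != x k.
  move=> j k h1' h2' h3'; have /andP [/andP [hj hk] jk] := iXX j k h1' h2' h3'.
  rewrite /x -(nX j hj) -(nX k hk); apply: parN => //; rewrite Hsz; exact: iX.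
have Hyy : forall j k, (0 < j)%N -> (j < k)%N -> (k <= N)%N -> y j != y k.
  move=> j k h1' h2' h3'; have /andP [/andP [hj hk] jk] := iXX j k h1' h2' h3'.
  rewrite /y -(nY j hj) -(nY k hk); apply: parN; [rewrite Hsz; exact: iY | rewrite Hsz; exact: iY | exact: iYY].
have HxV : forall k, (0 < k <= N)%N -> x k != v.
  move=> k hk; rewrite /x /v -(nX k hk) -nV; apply: parN; [rewrite Hsz; exact: iX | rewrite Hsz; exact: iV | exact: iXV].
have HyV : forall k, (0 < k <= N)%N -> y k != v.
  move=> k hk; rewrite /y /v -(nY k hk) -nV; apply: parN; [rewrite Hsz; exact: iY | rewrite Hsz; exact: iV | exact: iYV].
set a := dot _ (X 1%N) L. set b := dot _ T L. set c := dot _ t2 L.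
have Hl : ~ (a = 0 /\ b = 0 /\ c = 0).
  case=> a0 [b0 c0]; have := L_recover _ (X 1%N) T t2 L.
  rewrite -/a -/b -/c a0 b0 c0 !scale0r !addr0 => /eqP; rewrite scaler_eq0 (negbTE DtN) (negbTE LN0) //.
have Hequiv : forall j, (j <= N)%N -> incident (pts N U V X Y j) L <-> cond _ N x y v a b c j.
  move=> j hj; rewrite incidentE /pts /cond.
  case: ifP => hA.
    have /andP [h1' h2'] := iA j hA.
    rewrite /ptA /meet /join (incA _ _ _ _ _ _ _ _ _ _ _ _ _ _ _ _ _  (repX _ h1').2 (repX _ h2').2 (repY _ h1').2 (repY _ h2').2) -/a -/b -/c.
    have n1 := (repX _ h1').1; have n2 := (repX _ h2').1; have n3 := (repY _ h1').1; have n4 := (repY _ h2').1.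
    apply: mul_eq0_iff; rewrite !mulf_neq0 //.
      by rewrite subr_eq0 eq_sym Hxx.
    by rewrite subr_eq0 eq_sym Hyy.
  case: ifP => hB.
    rewrite /ptB /linesB /meet /join /zz /=; case: ifP => hodd.
      rewrite (incB _ _ _ _ _ _ _ _ _ _ _ _ _ _ _ _  repU (repX _ hk1).2 (repX _ hkN).2 repV.2) -/a -/b -/c.
      have n1 := (repX _ hk1).1; have n2 := (repX _ hkN).1; have n3 := repV.1.
      apply: mul_eq0_iff; rewrite !mulf_neq0 ?invr_neq0 //.
      by rewrite subr_eq0 eq_sym HxV.
    rewrite (incB _ _ _ _ _ _ _ _ _ _ _ _ _ _ _ _  repU (repX _ hk1).2 (repY _ hkN).2 repV.2) -/a -/b -/c.
    have n1 := (repX _ hk1).1; have n2 := (repY _ hkN).1; have n3 := repV.1.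
      apply: mul_eq0_iff; rewrite !mulf_neq0 ?invr_neq0 //.
    by rewrite subr_eq0 eq_sym HyV.
  rewrite /ptC /linesC /meet /join /ww /=; case: ifP => hodd.
    rewrite (incB _ _ _ _ _ _ _ _ _ _ _ _ _ _ _ _  repU (repY _ hk1).2 (repY _ hkN).2 repV.2) -/a -/b -/c.
    have n1 := (repY _ hk1).1; have n2 := (repY _ hkN).1; have n3 := repV.1.
      apply: mul_eq0_iff; rewrite !mulf_neq0 ?invr_neq0 //.
    by rewrite subr_eq0 eq_sym HyV.
  rewrite (incB _ _ _ _ _ _ _ _ _ _ _ _ _ _ _ _  repU (repY _ hk1).2 (repX _ hkN).2 repV.2) -/a -/b -/c.
  have n1 := (repY _ hk1).1; have n2 := (repX _ hkN).1; have n3 := repV.1.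
      apply: mul_eq0_iff; rewrite !mulf_neq0 ?invr_neq0 //.
  by rewrite subr_eq0 eq_sym HxV.
move=> j hj; case: (eqVneq j i) => [->|ji]; last exact: HL.
apply/Hequiv => //.
apply: (param _ _ _ _ _ _ _ _ i Hl HN Hxy Hxx Hyy HiN) => k hk ki.
by apply/Hequiv => //; apply: HL.
Qed.
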